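(* Let $\mathit{VI}$ be a finite set of variables with $\#\mathit{VI}=n$ and let $k\in\mathbb{N}$ with $1\le k\le n$. Then $\mathit{TS}_k\subseteq\mathit{TSD}_k$. Furthermore, if $n>1$ then $\mathit{TS}_k\subsetneq\mathit{TSD}_k$.
   Context: $\mathit{SG}=\wp(\mathit{VI})\setminus\{\emptyset\}$ and $\mathit{SH}=\wp(\mathit{SG})$, ordered by set inclusion. For $S\in\mathit{SG}$, $\mathrm{tuples}_k(S)=\{T\subseteq S\mid \#T=k\}$, and for $sh\in\mathit{SH}$, $\mathrm{tuples}_k(sh)=\bigcup_{S'\in sh}\mathrm{tuples}_k(S')$. Define $\rho_{\mathit{TS}_k}(sh)=\{S\in\mathit{SG}\mid \mathrm{tuples}_k(S)\subseteq\mathrm{tuples}_k(sh)\}$ and $\mathit{TS}_k=\rho_{\mathit{TS}_k}(\mathit{SH})$. Define $\rho_{\mathit{TSD}_k}(sh)=\{\,S\in\mathit{SG}\mid \forall T\subseteq S:\ \#T<k\implies S=\bigcup\{U\in sh\mid T\subseteq U\subseteq S\}\,\}$ and $\mathit{TSD}_k=\rho_{\mathit{TSD}_k}(\mathit{SH})$. Both maps are upper closure operators on $\mathit{SH}$. *)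

(* Defs.v *)
From mathcomp Require Import all_boot.
Set Implicit Arguments. Unset Strict Implicit. Unset Printing Implicit Defensive.

(* Variables VI : a finType.  SG = nonempty subsets of VI (elements of {set VI}
   different from set0).  SH = sets of elements of SG, i.e. sh : {set {set VI}}
   with set0 \notin sh. *)

Section TupleSharing.
Variable VI : finType.

Definition SH : {set {set {set VI}}} := [set sh : {set {set VI}} | set0 \notin sh].

Definition tuples (k : nat) (S : {set VI}) : {set {set VI}} :=
  [set T in powerset S | #|T| == k].

Definition tuples_sh (k : nat) (sh : {set {set VI}}) : {set {set VI}} :=
  \bigcup_(S' in sh) tuples k S'.

Definition rho_TS (k : nat) (sh : {set {set VI}}) : {set {set VI}} :=
  [set S : {set VI} | (S != set0) && (tuples k S \subset tuples_sh k sh)].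

Definition rho_TSD (k : nat) (sh : {set {set VI}}) : {set {set VI}} :=
  [set S : {set VI} | (S != set0) &&
     [forall T : {set VI}, ((T \subset S) && (#|T| < k)) ==>
        (S == \bigcup_(U in sh | (T \subset U) && (U \subset S)) U)]].

Definition TS (k : nat) : {set {set {set VI}}} := [set rho_TS k sh | sh in SH].
Definition TSD (k : nat) : {set {set {set VI}}} := [set rho_TSD k sh | sh in SH].

End TupleSharing.

(* Main.v *)
Require Import Defs.
From mathcomp Require Import all_boot.

Lemma rhoTSD_TS (VI : finType) k (sh : {set {set VI}}) :
  0 < k -> rho_TSD k (rho_TS k sh) = rho_TS k sh.
Proof.
move=> k0; apply/setP => S; rewrite !inE.
case S0: (S != set0) => //=.
apply/idP/idP.
- move/forallP => H; apply/subsetP => T'; rewrite inE => /andP[].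
  rewrite powersetE => sT' /eqP cT'.
  have: T' != set0 by rewrite -card_gt0 cT'.
  case/set0Pn => x xT'.
  have hT : (T' :\ x \subset S) && (#|T' :\ x| < k).
    rewrite (subset_trans (subD1set T' x) sT') /=.
    move: (cardsD1 x T'); rewrite xT' cT' => ->; by rewrite add1n ltnSn.
  move: (H (T' :\ x)) => /implyP /(_ hT) /eqP ES.
  have xS : x \in S := subsetP sT' x xT'.
  rewrite ES in xS; case/bigcupP: xS => U /andP[UA /andP[TU US]] xU.
  rewrite inE in UA; case/andP: UA => _ /subsetP; apply.
  rewrite inE powersetE cT' eqxx andbT.
  by rewrite -(setD1K xT') subUset sub1set xU TU.
- move=> H; apply/forallP => T; apply/implyP => /andP[TS _].
  rewrite eqEsubset; apply/andP; split.
  + apply: (bigcup_max S) => //.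
    by rewrite !inE S0 H TS subxx.
  + by apply/bigcupsP => U /andP[_ /andP[_ ]].
Qed.

Theorem proposition3p11 (VI : finType) (n k : nat) :
  #|VI| = n -> 1 <= k <= n ->
  TS VI k \subset TSD VI k /\ (1 < n -> TS VI k \proper TSD VI k).
Proof.
move=> cV /andP[k0 _].
have sub : TS VI k \subset TSD VI k.
  apply/subsetP => A /imsetP[sh _ ->].
  apply/imsetP; exists (rho_TS k sh); last by rewrite rhoTSD_TS.
  by rewrite !inE eqxx.
split => // n1; rewrite properE sub /=.
rewrite -cV in n1; case/card_gt1P: n1 => x [y [_ _ xy]].
apply/subsetPn; exists [set [set x; y]].
- apply/imsetP; exists [set [set x; y]].
    rewrite !inE; apply/negP => /eqP/setP/(_ x); by rewrite !inE eqxx.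
  apply/setP => S; rewrite !inE.
  apply/eqP/idP.
  + move=> ->; apply/andP; split.
      by apply/set0Pn; exists x; rewrite !inE eqxx.
    apply/forallP => T; apply/implyP => /andP[TS _].
    rewrite eqEsubset; apply/andP; split.
    * by apply: (bigcup_max [set x; y]) => //; rewrite !inE eqxx TS subxx.
    * by apply/bigcupsP => U /andP[_ /andP[_ ]].
  + case/andP => /set0Pn [z zS] /forallP /(_ set0) /implyP.
    rewrite sub0set cards0 k0 => /(_ isT) /eqP ES.
    apply/eqP; rewrite eqEsubset; apply/andP; split.
    * rewrite ES; apply/bigcupsP => U /andP[]; by rewrite inE => /eqP ->.
    * rewrite ES in zS; case/bigcupP: zS => U /andP[]; rewrite inE => /eqP -> /andP[_ ->] _.
      done.
- apply/imsetP => -[sh _ E].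
  have h1 : [set x; y] \in rho_TS k sh by rewrite -E inE.
  have h2 : [set x] \in rho_TS k sh.
    move: h1; rewrite !inE => /andP[_ H]; apply/andP; split.
      by apply/set0Pn; exists x; rewrite inE.
    apply: subset_trans H; apply/subsetP => T; rewrite !inE.
    case/andP => h ->; rewrite andbT; apply: subset_trans h _.
    by rewrite sub1set !inE eqxx.
  rewrite -E !inE in h2; move/eqP/setP: h2 => /(_ y).
  by rewrite !inE eqxx orbT eq_sym (negbTE xy).
Qed.
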